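(* Let $r\ge0$ and let $f:A\to B$ be a morphism of finitely generated $E_r$-cofibrant dga's over a field $\mathbf{k}$ of characteristic $0$. The following are equivalent: (1) $f$ admits an $r$-splitting; (2) the morphism $E_r:\mathrm{Aut}_W(f)\to\mathrm{Aut}(E_r(f))$ is surjective; (3) there exist $\alpha\in\mathbf{k}^*$, not a root of unity, and $\Phi=(\Phi^A,\Phi^B)\in\mathrm{Aut}_W(f)$ such that $E_r(\Phi^A)$ and $E_r(\Phi^B)$ are the $r$-bigrading automorphisms of $E_r(A)$ and $E_r(B)$ associated with $\alpha$.
   Context: Filtered dga's: a filtered dga over $\mathbf{k}$ is a non-negatively graded commutative dga $A$ (differential of degree $+1$) with an increasing multiplicative regular exhaustive filtration $W$ by subcomplexes, with filtered unit. $E_r(A)$ is the spectral sequence of $(A,W)$ with $E_0^{-p,n+p}(A)=Gr^W_pA^n$, a bigraded dga. $\mathrm{Aut}_W(f)$ is the group of pairs $(F^A,F^B)$ of filtered dga automorphisms of $A$ and $B$ with $fF^A=F^Bf$; $\mathrm{Aut}(E_r(f))$ is the group of pairs of bigraded dga automorphisms $(G^A,G^B)$ of $E_r(A),E_r(B)$ with $E_r(f)G^A=G^BE_r(f)$; $E_r$ denotes the induced group morphism. For $\alpha\in\mathbf{k}^*$, the $r$-bigrading automorphism $\varphi_\alpha$ of $E_r(A)$ is $\varphi_\alpha(a)=\alpha^{nr+p}a$ for $a\in E_r^{-p,n+p}(A)$. $E_r$-cofibrant dga's: an $E_r$-cofibrant extension of degree $n$ and weight $p$ of a filtered dga $A$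 is $A\otimes_\xi\Lambda V$ with $V$ concentrated in degree $n$ and pure weight $p$ and $\xi:V\to W_{p-r}A^{n+1}$ linear with $d\xi=0$; $dv=\xi(v)$, filtration extended multiplicatively. An $E_r$-cofibrant dga is the colimit of a sequence of such extensions from $\mathbf{k}$; finitely generated means finitely many extensions with finite-dimensional $V$. $r$-splitting: an $r$-splitting of a filtered dga $A$ is a direct sum decomposition $A=\bigoplus_{p,q}A^{p,q}$ with $d(A^{p,q})\subset A^{p+r,q-r+1}$, $A^{p,q}\cdot A^{p',q'}\subset A^{p+p',q+q'}$ and $W_mA^n=\bigoplus_{p\le m}A^{-p,n+p}$; a morphism $f:A\to B$ admits an $r$-splitting if $A,B$ admit $r$-splittings and $f(A^{p,q})\subset B^{p,q}$. *)

(* Defs.v *)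
From HB Require Import structures.
From mathcomp Require Import all_boot all_order all_algebra.
Set Implicit Arguments. Unset Strict Implicit. Unset Printing Implicit Defensive.
Import Order.TTheory GRing.Theory Num.Theory.
Local Open Scope ring_scope.

Record fdga (k : fieldType) := FDGA {
  car :> algType k;
  hdeg : nat -> pred car;
  W : int -> pred car;
  dd : car -> car }.
Arguments hdeg {k} f n.
Arguments W {k} f p.
Arguments dd {k} f x.

Definition is_subspace (k : fieldType) (V : lmodType k) (P : pred V) : Prop :=
  0 \in P /\ forall (a : k) (x y : V), x \in P -> y \in P -> a *: x + y \in P.

Record is_fdga (k : fieldType) (A : fdga k) : Prop := {
  hdeg_sub : forall n, is_subspace (hdeg A n);
  hdeg_span : forall x : A, exists (N : nat) (xs : nat -> A),
      (forall i, xs i \in hdeg A i) /\ x = \sum_(i < N) xs i;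
  hdeg_indep : forall (N : nat) (xs : nat -> A), (forall i, xs i \in hdeg A i) ->
      \sum_(i < N) xs i = 0 -> forall i, (i < N)%N -> xs i = 0;
  one_hdeg : (1 : A) \in hdeg A 0;
  mul_hdeg : forall (p q : nat) (x y : A), x \in hdeg A p -> y \in hdeg A q ->
      x * y \in hdeg A (p + q)%N;
  gcomm : forall (p q : nat) (x y : A), x \in hdeg A p -> y \in hdeg A q ->
      x * y = (-1) ^+ (p * q)%N * (y * x);
  dd_lin : forall (a : k) (x y : A), dd A (a *: x + y) = a *: dd A x + dd A y;
  dd_hdeg : forall n (x : A), x \in hdeg A n -> dd A x \in hdeg A n.+1;
  dd_dd : forall x : A, dd A (dd A x) = 0;
  dd_leib : forall (p : nat) (x y : A), x \in hdeg A p ->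
      dd A (x * y) = dd A x * y + (-1) ^+ p * (x * dd A y);
  W_sub : forall p, is_subspace (W A p);
  W_graded : forall p (x : A), x \in W A p -> exists (N : nat) (xs : nat -> A),
      (forall i, xs i \in hdeg A i /\ xs i \in W A p) /\ x = \sum_(i < N) xs i;
  W_incr : forall p (x : A), x \in W A p -> x \in W A (p + 1);
  W_dd : forall p (x : A), x \in W A p -> dd A x \in W A p;
  W_mul : forall p q (x y : A), x \in W A p -> y \in W A q -> x * y \in W A (p + q);
  W_one : (1 : A) \in W A 0;
  W_reg : forall n, exists q, forall x : A, x \in hdeg A n -> x \in W A q -> x = 0;
  W_exh : forall x : A, exists p, x \in W A p }.

Record is_fmor (k : fieldType) (A B : fdga k) (f : A -> B) : Prop := {
  fm_lin : forall (a : k) (x y : A), f (a *: x + y) = a *: f x + f y;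
  fm_mul : forall x y : A, f (x * y) = f x * f y;
  fm_one : f 1 = 1;
  fm_deg : forall n (x : A), x \in hdeg A n -> f x \in hdeg B n;
  fm_dd : forall x : A, f (dd A x) = dd B (f x);
  fm_W : forall p (x : A), x \in W A p -> f x \in W B p }.

Definition is_fauto (k : fieldType) (A : fdga k) (F : A -> A) : Prop :=
  is_fmor F /\ exists G : A -> A, [/\ is_fmor G, cancel F G & cancel G F].

(* Index convention: (p, n) = weight p, total degree n, i.e. the term
   E_r^{-p, n+p}(A).  Deligne's formulas for an increasing filtration:
     Z_s^{p,n} = { x in W_p A^n : dx in W_{p-s} A^{n+1} },
     E_r^{p,n} = Z_r^{p,n} / (Z_{r-1}^{p-1,n} + d Z_{r-1}^{p+r-1,n-1}).
   (For r = 0 this gives Gr^W_p A^n.)  Br is the denominator. *)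
Definition Zr (k : fieldType) (A : fdga k) (s p : int) (n : nat) : pred A :=
  [pred x | [&& x \in hdeg A n, x \in W A p & dd A x \in W A (p - s)]].

Arguments Zr {k} A s p n.

Definition Br (k : fieldType) (A : fdga k) (r p : int) (n : nat) (x : A) : Prop :=
  exists y z : A, [/\ y \in Zr A (r - 1) (p - 1) n,
     z \in Zr A (r - 1) (p + r - 1) n.-1, (0 < n)%N || (z == 0) & x = y + dd A z].

Arguments Br {k} A r p n x.

(* A bigraded dga automorphism G of E_r(A), described by lifts:
   g p n : A -> A represents G on E_r^{-p,n+p}(A) = Zr/Br, i.e. G [x] = [g p n x]. *)
Record is_Er_aut (k : fieldType) (A : fdga k) (r : nat)
    (g : int -> nat -> A -> A) : Prop := {
  ea_Z : forall p n x, x \in Zr A r%:Z p n -> g p n x \in Zr A r%:Z p n;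
  ea_wd : forall p n x, x \in Zr A r%:Z p n -> Br A r%:Z p n x -> Br A r%:Z p n (g p n x);
  ea_lin : forall p n (a : k) x y, x \in Zr A r%:Z p n -> y \in Zr A r%:Z p n ->
      Br A r%:Z p n (g p n (a *: x + y) - (a *: g p n x + g p n y));
  ea_inj : forall p n x, x \in Zr A r%:Z p n -> Br A r%:Z p n (g p n x) -> Br A r%:Z p n x;
  ea_surj : forall p n y, y \in Zr A r%:Z p n ->
      exists2 x, x \in Zr A r%:Z p n & Br A r%:Z p n (g p n x - y);
  ea_d : forall p n x, x \in Zr A r%:Z p n ->
      Br A r%:Z (p - r%:Z) n.+1 (g (p - r%:Z) n.+1 (dd A x) - dd A (g p n x));
  ea_mul : forall p q n m x y, x \in Zr A r%:Z p n -> y \in Zr A r%:Z q m ->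
      Br A r%:Z (p + q) (n + m)%N (g (p + q) (n + m)%N (x * y) - g p n x * g q m y);
  ea_one : Br A r%:Z 0 0 (g 0 0 1 - 1) }.

Definition Er_compat (k : fieldType) (A B : fdga k) (r : nat) (f : A -> B)
    (gA : int -> nat -> A -> A) (gB : int -> nat -> B -> B) : Prop :=
  forall p n x, x \in Zr A r%:Z p n -> Br B r%:Z p n (f (gA p n x) - gB p n (f x)).

Definition Er_is (k : fieldType) (A : fdga k) (r : nat) (F : A -> A)
    (g : int -> nat -> A -> A) : Prop :=
  forall p n x, x \in Zr A r%:Z p n -> Br A r%:Z p n (F x - g p n x).

Definition bigrading (k : fieldType) (A : fdga k) (r : nat) (alpha : k) :
    int -> nat -> A -> A :=
  fun p n x => (alpha ^ ((n * r)%N%:Z + p)) *: x.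

Arguments bigrading {k} A r alpha p n x.

Record is_rsplitting (k : fieldType) (A : fdga k) (r : nat)
    (S : int -> int -> pred A) : Prop := {
  sp_sub : forall p q, is_subspace (S p q);
  sp_span : forall x : A, exists (s : seq (int * int)) (xs : int * int -> A),
      (forall i, xs i \in S i.1 i.2) /\ x = \sum_(i <- s) xs i;
  sp_indep : forall (s : seq (int * int)) (xs : int * int -> A), uniq s ->
      (forall i, xs i \in S i.1 i.2) -> \sum_(i <- s) xs i = 0 ->
      forall i, i \in s -> xs i = 0;
  sp_d : forall p q x, x \in S p q -> dd A x \in S (p + r%:Z) (q - r%:Z + 1);
  sp_mul : forall p q p' q' x y, x \in S p q -> y \in S p' q' ->
      x * y \in S (p + p') (q + q');
  sp_W : forall (m : int) (n : nat) (x : A),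
      (x \in hdeg A n /\ x \in W A m) <->
      exists (s : seq int) (xs : int -> A),
        (forall p, p \in s -> p <= m /\ xs p \in S (- p) (n%:Z + p)) /\
        x = \sum_(p <- s) xs p }.

Definition admits_rsplitting (k : fieldType) (A B : fdga k) (r : nat) (f : A -> B) : Prop :=
  exists (SA : int -> int -> pred A) (SB : int -> int -> pred B),
    [/\ is_rsplitting r SA, is_rsplitting r SB &
        forall p q x, x \in SA p q -> f x \in SB p q].

(* A finitely generated E_r-cofibrant dga is an iterated sequence of E_r-cofibrant
   extensions k (x)_xi LV_1 (x)_xi ... (x)_xi LV_N with V_j finite-dimensional;
   splitting each V_j into a basis, this is the same as an ordered family of
   homogeneous generators v_0,...,v_{m-1} (degree nd i, weight pw i) such that:
   the graded-commutative monomials in the v_i form a basis of A, W_q A is spanned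
   by the monomials of weight <= q (multiplicative extension of the filtration),
   and d v_i lies in W_{pw i - r} of the subalgebra generated by v_0..v_{i-1}. *)
Definition admissible (m : nat) (nd : 'I_m -> nat) (e : {ffun 'I_m -> nat}) : Prop :=
  forall i, odd (nd i) -> (e i <= 1)%N.

Definition monom (k : fieldType) (A : fdga k) (m : nat) (v : 'I_m -> A)
    (e : {ffun 'I_m -> nat}) : A := \prod_(i < m) v i ^+ e i.

Definition mweight (m : nat) (pw : 'I_m -> int) (e : {ffun 'I_m -> nat}) : int :=
  \sum_(i < m) (e i)%:Z * pw i.

Definition in_mspan (k : fieldType) (A : fdga k) (m : nat) (nd : 'I_m -> nat)
    (v : 'I_m -> A) (P : {ffun 'I_m -> nat} -> Prop) (x : A) : Prop :=
  exists (s : seq {ffun 'I_m -> nat}) (c : {ffun 'I_m -> nat} -> k),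
    (forall e, e \in s -> admissible nd e /\ P e) /\
    x = \sum_(e <- s) c e *: monom v e.

Definition is_fg_Er_cofibrant (k : fieldType) (A : fdga k) (r : nat) : Prop :=
  exists (m : nat) (v : 'I_m -> A) (nd : 'I_m -> nat) (pw : 'I_m -> int),
  [/\ forall i, v i \in hdeg A (nd i),
      (forall (s : seq {ffun 'I_m -> nat}) (c : {ffun 'I_m -> nat} -> k), uniq s ->
         (forall e, e \in s -> admissible nd e) ->
         \sum_(e <- s) c e *: monom v e = 0 -> forall e, e \in s -> c e = 0),
      (forall x : A, in_mspan nd v (fun _ => True) x),
      (forall (q : int) (x : A), x \in W A q <-> in_mspan nd v (fun e => mweight pw e <= q) x) &
      (forall i : 'I_m, dd A (v i) \in W A (pw i - r%:Z) /\
         in_mspan nd v (fun e => forall j : 'I_m, (i <= j)%N -> e j = 0) (dd A (v i)))].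

Definition Er_surjective (k : fieldType) (A B : fdga k) (r : nat) (f : A -> B) : Prop :=
  forall (gA : int -> nat -> A -> A) (gB : int -> nat -> B -> B),
    is_Er_aut r gA -> is_Er_aut r gB -> Er_compat r f gA gB ->
    exists (FA : A -> A) (FB : B -> B),
      [/\ is_fauto FA, is_fauto FB, (forall x, f (FA x) = FB (f x)),
          Er_is r FA gA & Er_is r FB gB].

Definition bigrading_lift (k : fieldType) (A B : fdga k) (r : nat) (f : A -> B) : Prop :=
  exists alpha : k, [/\ alpha != 0, (forall j, (0 < j)%N -> alpha ^+ j != 1) &
    exists (FA : A -> A) (FB : B -> B),
      [/\ is_fauto FA, is_fauto FB, (forall x, f (FA x) = FB (f x)),
          Er_is r FA (bigrading A r alpha) & Er_is r FB (bigrading B r alpha)]].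

(* Main.v *)
Require Import Defs.
From HB Require Import structures.
From mathcomp Require Import all_boot all_order all_algebra.
From mathcomp Require Import zify.
From Stdlib Require Import ClassicalEpsilon.
Import Order.TTheory GRing.Theory Num.Theory.
Open Scope ring_scope.

Module Aux.
Set Implicit Arguments. Unset Strict Implicit. Unset Printing Implicit Defensive.

Section Sub.
Variables (k : fieldType) (V : lmodType k) (P : pred V).
Hypothesis hP : is_subspace P.
Lemma sub0 : 0 \in P. Proof. by case: hP. Qed.
Lemma subD x y : x \in P -> y \in P -> x + y \in P.
Proof. by move=> hx hy; have := hP.2 1 x y hx hy; rewrite scale1r. Qed.
Lemma subZ a x : x \in P -> a *: x \in P.
Proof. by move=> hx; have := hP.2 a x 0 hx sub0; rewrite addr0. Qed.
Lemma subN x : x \in P -> - x \in P.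
Proof. by move=> hx; have := subZ (-1) hx; rewrite scaleN1r. Qed.
Lemma subB x y : x \in P -> y \in P -> x - y \in P.
Proof. by move=> hx hy; apply: subD => //; apply: subN. Qed.
Lemma subsum (I : eqType) (s : seq I) (F : I -> V) :
  (forall i, i \in s -> F i \in P) -> \sum_(i <- s) F i \in P.
Proof.
elim: s => [|i s IH] H; first by rewrite big_nil sub0.
rewrite big_cons; apply: subD; first by apply: H; rewrite inE eqxx.
by apply: IH => j hj; apply: H; rewrite inE hj orbT.
Qed.
End Sub.

Section Lin.
Variables (k : fieldType) (U V : lmodType k) (h : U -> V).
Hypothesis hl : forall a x y, h (a *: x + y) = a *: h x + h y.
Lemma lin0 : h 0 = 0.
Proof. have := hl 1 0 0; rewrite !scale1r !addr0 => /eqP.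
by rewrite -{1}[h 0]addr0 (inj_eq (addrI _)) eq_sym => /eqP. Qed.
Lemma linD x y : h (x + y) = h x + h y.
Proof. by have := hl 1 x y; rewrite !scale1r. Qed.
Lemma linZ a x : h (a *: x) = a *: h x.
Proof. by have := hl a x 0; rewrite !addr0 lin0 addr0. Qed.
Lemma linN x : h (- x) = - h x.
Proof. by rewrite -scaleN1r linZ scaleN1r. Qed.
Lemma linB x y : h (x - y) = h x - h y.
Proof. by rewrite linD linN. Qed.
Lemma linsum (I : Type) (s : seq I) (F : I -> U) :
  h (\sum_(i <- s) F i) = \sum_(i <- s) h (F i).
Proof.
elim: s => [|i s IH]; first by rewrite !big_nil lin0.
by rewrite !big_cons linD IH.
Qed.
End Lin.


Definition Dr (k : fieldType) (A : fdga k) (r : nat) :=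
  forall p (x : A), x \in W A p -> dd A x \in W A (p - r%:Z).

Section Basic.
Variables (k : fieldType) (A : fdga k).
Hypothesis hA : is_fdga A.


Lemma hdeg0 (n : nat) : (0 : A) \in hdeg A n. Proof. exact: (@sub0 k A _ (hdeg_sub hA n)). Qed.
Lemma hdegD (n : nat) (x y : A) : x \in hdeg A n -> y \in hdeg A n -> x + y \in hdeg A n.
Proof. exact: (@subD k A _ (hdeg_sub hA n)). Qed.
Lemma hdegZ (n : nat) a (x : A) : x \in hdeg A n -> a *: x \in hdeg A n.
Proof. exact: (@subZ k A _ (hdeg_sub hA n)). Qed.
Lemma hdegN (n : nat) (x : A) : x \in hdeg A n -> - x \in hdeg A n.
Proof. exact: (@subN k A _ (hdeg_sub hA n)). Qed.
Lemma hdegB (n : nat) (x y : A) : x \in hdeg A n -> y \in hdeg A n -> x - y \in hdeg A n.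
Proof. exact: (@subB k A _ (hdeg_sub hA n)). Qed.
Lemma hdegsum (n : nat) (I : eqType) (s : seq I) (F : I -> A) :
  (forall i, i \in s -> F i \in hdeg A n) -> \sum_(i <- s) F i \in hdeg A n.
Proof. exact: (@subsum k A _ (hdeg_sub hA n)). Qed.

Lemma W0 (n : int) : (0 : A) \in W A n. Proof. exact: (@sub0 k A _ (W_sub hA n)). Qed.
Lemma WD (n : int) (x y : A) : x \in W A n -> y \in W A n -> x + y \in W A n.
Proof. exact: (@subD k A _ (W_sub hA n)). Qed.
Lemma WZ (n : int) a (x : A) : x \in W A n -> a *: x \in W A n.
Proof. exact: (@subZ k A _ (W_sub hA n)). Qed.
Lemma WN (n : int) (x : A) : x \in W A n -> - x \in W A n.
Proof. exact: (@subN k A _ (W_sub hA n)). Qed.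
Lemma WB (n : int) (x y : A) : x \in W A n -> y \in W A n -> x - y \in W A n.
Proof. exact: (@subB k A _ (W_sub hA n)). Qed.
Lemma Wsum (n : int) (I : eqType) (s : seq I) (F : I -> A) :
  (forall i, i \in s -> F i \in W A n) -> \sum_(i <- s) F i \in W A n.
Proof. exact: (@subsum k A _ (W_sub hA n)). Qed.

Lemma dd0 : dd A 0 = 0. Proof. exact: (@lin0 k A A _ (dd_lin hA)). Qed.
Lemma ddD x y : dd A (x + y) = dd A x + dd A y. Proof. exact: (@linD k A A _ (dd_lin hA)). Qed.
Lemma ddZ a x : dd A (a *: x) = a *: dd A x. Proof. exact: (@linZ k A A _ (dd_lin hA)). Qed.
Lemma ddN x : dd A (- x) = - dd A x. Proof. exact: (@linN k A A _ (dd_lin hA)). Qed.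
Lemma ddB x y : dd A (x - y) = dd A x - dd A y. Proof. exact: (@linB k A A _ (dd_lin hA)). Qed.
Lemma ddsum (I : Type) (s : seq I) (F : I -> A) :
  dd A (\sum_(i <- s) F i) = \sum_(i <- s) dd A (F i).
Proof. exact: (@linsum k A A _ (dd_lin hA)). Qed.

Lemma Wle p q (x : A) : p <= q -> x \in W A p -> x \in W A q.
Proof.
move=> le hx; have -> : q = p + (`|q - p|%N)%:Z.
  by rewrite gez0_abs ?subr_ge0 // addrCA subrr addr0.
elim: `|q - p|%N => [|j IH]; first by rewrite addr0.
by rewrite -addn1 PoszD addrA; apply: (W_incr hA).
Qed.

Lemma dd1 : dd A 1 = 0.
Proof.
have := dd_leib hA 1 (one_hdeg hA); rewrite !mul1r mulr1 => /eqP.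
by rewrite -{1}[dd A 1]addr0 (inj_eq (addrI _)) eq_sym => /eqP.
Qed.

Lemma signM (V : pred A) (n : nat) (x : A) : is_subspace V -> x \in V ->
  (-1) ^+ n * x \in V.
Proof.
move=> hV hx; rewrite -signr_odd; case: (odd n); rewrite ?expr1 ?expr0 ?mulN1r ?mul1r //.
exact: subN.
Qed.

Section Cof.
Variable r : nat.
Definition Good (w : int) (x : A) :=
  exists n, [/\ x \in hdeg A n, x \in W A w & dd A x \in W A (w - r%:Z)].

Lemma Good1 : Good 0 1.
Proof. exists 0%N; split; [exact: one_hdeg hA|exact: W_one hA|rewrite dd1; exact: sub0 (W_sub hA _)]. Qed.

Lemma GoodM w1 w2 x y : Good w1 x -> Good w2 y -> Good (w1 + w2) (x * y).
Proof.
move=> [n1 [h1 W1 d1]] [n2 [h2 W2 d2]]; exists (n1 + n2)%N; split.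
- exact: mul_hdeg.
- exact: W_mul.
rewrite (dd_leib hA _ h1); apply: subD; first exact: W_sub hA _.
  by have := W_mul hA d1 W2; rewrite addrAC.
apply: signM; first exact: W_sub hA _.
by have := W_mul hA W1 d2; rewrite addrA.
Qed.

Lemma Goodle w w' x : w <= w' -> Good w x -> Good w' x.
Proof.
move=> le [n [h1 W1 d1]]; exists n; split => //; first exact: Wle W1.
by apply: Wle d1; rewrite lerD2r.
Qed.

Lemma GoodX w x j : Good w x -> Good (j%:Z * w) (x ^+ j).
Proof.
move=> g; elim: j => [|j IH]; first by rewrite mul0r expr0; exact: Good1.
by rewrite exprS -addn1 PoszD mulrDl mul1r addrC; apply: GoodM.
Qed.

Lemma cof_Dr : is_fdga A -> is_fg_Er_cofibrant A r -> Dr A r.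
Proof.
move=> _ [m [v [nd [pw [hv hind hspan hW hdv]]]]].
have Gv : forall i, Good (pw i) (v i).
  move=> i; exists (nd i); split; [exact: hv| |exact: (hdv i).1].
  apply/hW; exists [:: [ffun j => nat_of_bool (j == i)]], (fun _ => 1); split.
    move=> e; rewrite inE => /eqP ->; split.
      by move=> j _; rewrite ffunE; case: (j == i).
    rewrite /mweight (bigD1 i) //= big1 ?ffunE ?eqxx ?addr0 ?mul1r //.
    by move=> j /negbTE hj; rewrite ffunE hj mul0r.
  rewrite big_cons big_nil addr0 scale1r /monom.
  rewrite (eq_bigr (fun j => if j == i then v j else 1)); last first.
    by move=> j _; rewrite ffunE; case: (j == i); rewrite ?expr1 ?expr0.
  by rewrite -big_mkcond big_pred1_eq.
have Gm : forall e, Good (mweight pw e) (monom v e).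
  move=> e; rewrite /mweight /monom.
  apply: (big_rec2 (fun (x : A) (w : int) => Good w x)); first exact: Good1.
  by move=> i y1 y2 _ g; apply: GoodM => //; apply: GoodX.
move=> q x /hW [s [c [hs ->]]]; rewrite ddsum; apply: subsum; first exact: W_sub hA _.
move=> e /hs [_ le]; rewrite ddZ; apply: subZ; first exact: W_sub hA _.
have [n [_ _ d]] := Goodle le (Gm e); exact: d.
Qed.
End Cof.
End Basic.


Section ZB.
Variables (k : fieldType) (A : fdga k) (r : nat).
Hypothesis hA : is_fdga A.
Hypothesis hD : Dr A r.

Lemma Zr_Dr p n (x : A) : (x \in Zr A r%:Z p n) = (x \in hdeg A n) && (x \in W A p).
Proof.
rewrite /Zr inE /=; case: (x \in hdeg A n) => //=.
by apply/andP/idP => [[]//|h]; split => //; apply: hD.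
Qed.

Lemma Br_Dr p n (x : A) : Br A r%:Z p n x <-> (x \in hdeg A n /\ x \in W A (p - 1)).
Proof.
split.
- move=> [y [z [hy hz hn ->]]].
  move: hy; rewrite /Zr inE /= => /and3P [hy1 hy2 _].
  move: hz; rewrite /Zr inE /= => /and3P [hz1 hz2 _].
  split; apply: subD => //; try exact: hdeg_sub hA _; try exact: W_sub hA _.
    case/orP: hn => [n0|/eqP ->]; last by rewrite dd0 //; exact: hdeg0.
    by have := dd_hdeg hA hz1; rewrite prednK.
  apply: (@Wle _ _ hA _ _ _ _ (hD hz2)); lia.
- move=> [h1 h2]; exists x, 0; split.
  + rewrite /Zr inE /= h1 h2 /=; apply: (@Wle _ _ hA _ _ _ _ (hD h2)); lia.
  + rewrite /Zr inE /= dd0 //; apply/and3P; split;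
      [exact: hdeg0|exact: W0|exact: W0].
  + by rewrite eqxx orbT.
  + by rewrite dd0 // addr0.
Qed.

Lemma Br0 p n : Br A r%:Z p n 0.
Proof. by apply/Br_Dr; split; [exact: hdeg0|exact: W0]. Qed.

Definition lam (alpha : k) (n : nat) (p : int) := alpha ^ ((n * r)%N%:Z + p).

Lemma bigrading_aut (alpha : k) : alpha != 0 -> is_Er_aut r (bigrading A r alpha).
Proof.
move=> a0; have l0 : forall n p, lam alpha n p != 0 by move=> n p; rewrite expfz_neq0.
rewrite /bigrading; split.
- move=> p n x; rewrite !Zr_Dr => /andP [h1 h2].
  by rewrite (hdegZ hA) // (WZ hA).
- move=> p n x _ /Br_Dr [h1 h2]; apply/Br_Dr; split;
    [exact: hdegZ|exact: WZ].
- move=> p n a x y _ _; rewrite scalerDr !scalerA mulrC subrr; exact: Br0.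
- move=> p n x _ /Br_Dr [h1 h2]; apply/Br_Dr.
  have -> : x = (lam alpha n p)^-1 *: (alpha ^ ((n * r)%N%:Z + p) *: x).
    by rewrite scalerA mulVf ?scale1r // -/(lam alpha n p).
  by split; [exact: hdegZ|exact: WZ].
- move=> p n y hy; exists ((lam alpha n p)^-1 *: y).
    by move: hy; rewrite !Zr_Dr => /andP [h1 h2];
       rewrite (hdegZ hA) // (WZ hA).
  by rewrite scalerA -/(lam alpha n p) mulfV // scale1r subrr; exact: Br0.
- move=> p n x _; rewrite ddZ //.
  have -> : ((n.+1 * r)%N%:Z + (p - r%:Z)) = ((n * r)%N%:Z + p) by lia.
  rewrite subrr; exact: Br0.
- move=> p q n m x y _ _; rewrite -scalerAl -scalerAr scalerA -expfzDr //.
  have -> : ((n + m) * r)%N%:Z + (p + q) = ((n * r)%N%:Z + p) + ((m * r)%N%:Z + q) by lia.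
  rewrite subrr; exact: Br0.
- by rewrite mul0n addr0 expr0z scale1r subrr; exact: Br0.
Qed.
End ZB.


Section Fmor.
Variables (k : fieldType) (A B : fdga k) (f : A -> B).
Hypothesis hf : is_fmor f.
Lemma f0 : f 0 = 0. Proof. exact: (@lin0 k A B _ (fm_lin hf)). Qed.
Lemma fD x y : f (x + y) = f x + f y. Proof. exact: (@linD k A B _ (fm_lin hf)). Qed.
Lemma fZ a x : f (a *: x) = a *: f x. Proof. exact: (@linZ k A B _ (fm_lin hf)). Qed.
Lemma fN x : f (- x) = - f x. Proof. exact: (@linN k A B _ (fm_lin hf)). Qed.
Lemma fB x y : f (x - y) = f x - f y. Proof. exact: (@linB k A B _ (fm_lin hf)). Qed.
Lemma fsum (I : Type) (s : seq I) (F : I -> A) :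
  f (\sum_(i <- s) F i) = \sum_(i <- s) f (F i).
Proof. exact: (@linsum k A B _ (fm_lin hf)). Qed.
End Fmor.

Lemma char0_nat (k : fieldType) (n : nat) : [pchar k] =i pred0 -> (0 < n)%N -> n%:R != 0 :> k.
Proof.
move=> hc n0; apply/negP => /(natf0_pchar n0) [p]; by rewrite hc.
Qed.

Lemma two_ok (k : fieldType) : [pchar k] =i pred0 ->
  (2 : k) != 0 /\ (forall j, (0 < j)%N -> (2 : k) ^+ j != 1).
Proof.
move=> hc; split; first by have := @char0_nat k 2 hc isT.
move=> j j0; rewrite -natrX -subr_eq0.
have -> : (1 : k) = (1%N)%:R by [].
rewrite -natrB; last by rewrite expn_gt0.
apply: char0_nat => //; rewrite subn_gt0.
by rewrite -{1}(expn0 2) ltn_exp2l.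
Qed.

Lemma two_three (k : fieldType) (r : nat) (A B : fdga k) (f : A -> B) :
  [pchar k] =i pred0 -> is_fdga A -> is_fdga B -> is_fmor f ->
  Dr A r -> Dr B r -> Er_surjective r f -> bigrading_lift r f.
Proof.
move=> hc hA hB hf DA DB hs; have [t0 t1] := two_ok hc.
have [FA [FB [h1 h2 h3 h4 h5]]] := hs _ _ (bigrading_aut hA DA t0) (bigrading_aut hB DB t0)
  (fun p n x _ => ltac:(rewrite /bigrading (fZ hf) subrr; exact: (Br0 hB DB))).
by exists 2; split => //; exists FA, FB.
Qed.


Lemma rep_conv (I : eqType) (V : zmodType) (S : I -> pred V)
  (hS0 : forall i, 0 \in S i) (hSD : forall i x y, x \in S i -> y \in S i -> x + y \in S i)
  (L : seq (I * V)) : (forall u, u \in L -> u.2 \in S u.1) ->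
  exists (s : seq I) (xs : I -> V), [/\ uniq s, forall i, xs i \in S i &
    \sum_(u <- L) u.2 = \sum_(i <- s) xs i].
Proof.
elim: L => [|[i v] L IH] hL.
  by exists [::], (fun _ => 0); split => //; rewrite !big_nil.
have [s [xs [us hxs e]]] := IH (fun u hu => hL u (ltac:(by rewrite inE hu orbT))).
have hv : v \in S i by apply: (hL (i, v)); rewrite inE eqxx.
rewrite big_cons e /=; case: (boolP (i \in s)) => his.
- exists s, (fun j => if j == i then v + xs i else xs j); split => //.
    by move=> j; case: eqP => [->|_]; [exact: hSD hv (hxs i)|exact: hxs].
  rewrite (bigD1_seq i) //= [in RHS](bigD1_seq i) //= eqxx addrA; congr (_ + _).
  by apply: eq_bigr => j /negbTE ->.
- exists (i :: s), (fun j => if j == i then v else xs j); split.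
  + by rewrite /= his.
  + by move=> j; case: eqP => [->|_]; [exact: hv|exact: hxs].
  + rewrite big_cons eqxx; congr (_ + _); apply: eq_big_seq => j hj.
    by case: eqP => // ej; move: his; rewrite -ej hj.
Qed.

Section Eig.
Variables (k : fieldType) (A : fdga k) (r : nat) (alpha : k) (Phi : A -> A).
Hypothesis hA : is_fdga A.
Hypothesis DA : Dr A r.
Hypothesis a0 : alpha != 0.
Hypothesis aro : forall j, (0 < j)%N -> alpha ^+ j != 1.
Hypothesis hP : is_fmor Phi.
Hypothesis hE : Er_is r Phi (bigrading A r alpha).

Local Notation lm := (lam r alpha).

Lemma lm_neq0 n p : lm n p != 0. Proof. by rewrite /lam expfz_neq0. Qed.

Lemma lm_inj n p q : lm n p = lm n q -> p = q.
Proof.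
rewrite /lam => e.
have : alpha ^ (p - q) = 1.
  have := e; rewrite (_ : (n * r)%N%:Z + p = ((n * r)%N%:Z + q) + (p - q)); last by lia.
  rewrite expfzDr // => /eqP; rewrite -{2}[alpha ^ _]mulr1 (inj_eq (mulfI _)) ?expfz_neq0 //.
  by move/eqP.
case E: (p - q) => [j|j].
- case: j E => [|j] E; first by move=> _; lia.
  by move=> h; have := aro (ltn0Sn j); rewrite -h eqxx.
- move=> h; have : (alpha ^+ j.+1)^-1 = 1 := h.
  move/eqP; rewrite invr_eq1 => /eqP h1.
  by have := aro (ltn0Sn j); rewrite h1 eqxx.
Qed.

Lemma EH n p x : x \in hdeg A n -> x \in W A p ->
  (Phi x - lm n p *: x \in hdeg A n) /\ (Phi x - lm n p *: x \in W A (p - 1)).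
Proof. move=> h1 h2; apply/(Br_Dr hA DA); apply: hE; rewrite (Zr_Dr DA) h1 h2 //. Qed.

Definition Eig n p (x : A) := x \in hdeg A n /\ Phi x = lm n p *: x.

Lemma eig0 n p : Eig n p 0.
Proof. by split; [exact: hdeg0|rewrite (f0 hP) scaler0]. Qed.

Lemma eigZ n p c x : Eig n p x -> Eig n p (c *: x).
Proof. by move=> [h1 h2]; split; [exact: hdegZ|rewrite (fZ hP) h2 !scalerA mulrC]. Qed.

Lemma eig_W n p x : Eig n p x -> x \in W A p.
Proof.
move=> [h1 h2]; have [q hq] := W_exh hA x.
case: (lerP q p) => [le|lt]; first by apply: (Wle hA le hq).
suff: forall j : nat, x \in W A (p + j%:Z) -> x \in W A p.
  by move=> H; apply: (H `|q - p|%N); have -> : p + (`|q - p|%N)%:Z = q by lia.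
elim => [|j IH]; first by rewrite addr0.
move=> hx; apply: IH.
have [_ hw] := EH h1 hx.
rewrite h2 -scalerBl in hw.
have ne : lm n p - lm n (p + (j.+1)%:Z) != 0.
  by rewrite subr_eq0; apply/eqP => /lm_inj; lia.
have := WZ hA (lm n p - lm n (p + (j.+1)%:Z))^-1 hw; rewrite scalerA mulVf // scale1r.
by rewrite (_ : p + (j.+1)%:Z - 1 = p + j%:Z) //; lia.
Qed.

Lemma zmod_aux (V : zmodType) (a b c d : V) : b - d = a - c -> a - b = c - d.
Proof.
move=> e; rewrite -[a](subrK c) -e.
by rewrite [b - d + c]addrC -addrA [_ + (- b)]addrC addKr.
Qed.

Lemma eig_decomp n : forall m y, y \in hdeg A n -> y \in W A m ->
  exists (s : seq int) (ys : int -> A), [/\ forall p, Eig n p (ys p),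
    forall p, p \in s -> p <= m & y = \sum_(p <- s) ys p].
Proof.
move: (W_reg hA n) => [q0 hq0].
suff H : forall j : nat, forall m y, m <= q0 + j%:Z -> y \in hdeg A n -> y \in W A m ->
  exists (s : seq int) (ys : int -> A), [/\ forall p, Eig n p (ys p),
    forall p, p \in s -> p <= m & y = \sum_(p <- s) ys p].
  by move=> m y h1 h2; apply: (H `|m - q0|%N) => //; lia.
elim=> [|j IH] m y lem h1 h2.
  have y0 : y = 0 by apply: hq0 => //; apply: (Wle hA _ h2); lia.
  exists [::], (fun _ => 0); split => //; [move=> p; exact: eig0| by rewrite big_nil].
have [hz1 hz2] := EH h1 h2.
have [s [zs [hzs hs hz]]] := IH (m - 1) _ (ltac:(lia)) hz1 hz2.
pose ys := fun p => (lm n p - lm n m)^-1 *: zs p.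
pose ym := y - \sum_(p <- s) ys p.
have nem : forall p, p \in s -> lm n p - lm n m != 0.
  move=> p /hs hp; rewrite subr_eq0; apply/eqP => /lm_inj; lia.
have Eys : forall p, Eig n p (ys p) by move=> p; apply: eigZ.
have Eym : Eig n m ym.
  split.
    apply: hdegB => //; apply: hdegsum => // p _; exact: (Eys p).1.
  rewrite /ym (fB hP) (fsum hP) scalerBr scaler_sumr; apply: zmod_aux.
  rewrite -sumrB hz; apply: eq_big_seq => p hp.
  by rewrite (Eys p).2 -scalerBl /ys scalerA mulfV ?scale1r // nem.
exists (m :: s), (fun p => if p == m then ym else ys p); split.
- by move=> p; case: eqP => [->|_] //; exact: Eys.
- by move=> p; rewrite inE => /orP [/eqP -> // | /hs]; lia.
- rewrite big_cons eqxx.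
  rewrite (eq_big_seq ys); first by rewrite /ym subrK.
  by move=> p /hs hp; case: eqP => //; lia.
Qed.

Lemma eig_indep (I : eqType) (s : seq I) (l : I -> k) (y : I -> A) :
  uniq s -> {in s &, injective l} -> (forall i, i \in s -> Phi (y i) = l i *: y i) ->
  \sum_(i <- s) y i = 0 -> forall i, i \in s -> y i = 0.
Proof.
elim: s y => [|i0 s IH] y //= /andP [ni us] linj hy hs.
have hs' : \sum_(i <- s) (l i - l i0) *: y i = 0.
  have : Phi (\sum_(i <- i0 :: s) y i) - l i0 *: \sum_(i <- i0 :: s) y i = 0.
    by rewrite hs (f0 hP) scaler0 subrr.
  rewrite (fsum hP) scaler_sumr -sumrB big_cons (hy i0 (mem_head _ _)) subrr add0r.
  move=> e; apply: etrans _ e; apply: eq_big_seq => i hi; by rewrite hy ?inE ?hi ?orbT // scalerBl.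
have H := IH (fun i => (l i - l i0) *: y i) us
  (fun a b ha hb => linj a b (ltac:(by rewrite inE ha orbT)) (ltac:(by rewrite inE hb orbT)))
  (fun i hi => ltac:(by rewrite (fZ hP) hy ?inE ?hi ?orbT // !scalerA mulrC)) hs'.
have ys0 : forall i, i \in s -> y i = 0.
  move=> i hi; have := H i hi => /eqP; rewrite scaler_eq0 => /orP [|/eqP //].
  rewrite subr_eq0 => /eqP /linj e; exfalso.
  have e' := e (ltac:(by rewrite inE hi orbT)) (mem_head _ _).
  by move: ni; rewrite -e' hi.
move=> i; rewrite inE => /orP [/eqP ->|]; last exact: ys0.
move: hs; rewrite big_cons big1_seq ?addr0 //.
Qed.

Definition SS (a b : int) : pred A := [pred x | if 0 <= a + b then
  (x \in hdeg A (absz (a + b))) && (Phi x == lm (absz (a + b)) (- a) *: x) else x == 0].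

Lemma SS_intro a b (n : nat) x : a + b = n%:Z -> Eig n (-a) x -> x \in SS a b.
Proof. by move=> e [h1 h2]; rewrite inE /= e /= h1 h2 eqxx. Qed.

Lemma SS_gen a b x : x \in SS a b -> x = 0 \/ exists n : nat, a + b = n%:Z /\ Eig n (-a) x.
Proof.
rewrite inE /=; case: ifP => h; last by move/eqP; left.
move=> /andP [h1 /eqP h2]; right; exists (absz (a + b)); split => //.
by rewrite gez0_abs.
Qed.

Lemma SS0 a b : 0 \in SS a b.
Proof. rewrite inE /=; case: ifP => _ //; by rewrite hdeg0 // (f0 hP) scaler0 eqxx. Qed.

Lemma SS_eigp n p x : x \in SS (-p) (n%:Z + p) <-> Eig n p x.
Proof.
split.
- move=> /SS_gen [->|[n' [e h]]]; first exact: eig0.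
  have -> : n = n' by lia.
  by rewrite opprK in h.
- move=> h; apply: (SS_intro (n := n)); first lia.
  by rewrite opprK.
Qed.

Lemma SS_sub a b : is_subspace (SS a b).
Proof.
split; first exact: SS0.
move=> c x y; rewrite !inE /=; case: ifP => _; last by move=> /eqP -> /eqP ->; rewrite scaler0 addr0.
move=> /andP [h1 /eqP e1] /andP [h2 /eqP e2].
rewrite hdegD ?hdegZ //= (fm_lin hP) e1 e2 scalerDr !scalerA mulrC.
by rewrite eqxx.
Qed.

Lemma SS_d a b x : x \in SS a b -> dd A x \in SS (a + r%:Z) (b - r%:Z + 1).
Proof.
move=> /SS_gen [->|[n [e [h1 h2]]]]; first by rewrite dd0 // SS0.
apply: (SS_intro (n := n.+1)); first lia.
split; first exact: dd_hdeg.
rewrite (fm_dd hP) h2 ddZ //; congr (_ *: _); rewrite /lam; congr (_ ^ _).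
rewrite mulSn; lia.
Qed.

Lemma SS_mul a b a' b' x y : x \in SS a b -> y \in SS a' b' -> x * y \in SS (a + a') (b + b').
Proof.
move=> /SS_gen [->|[n [e [h1 h2]]]]; first by rewrite mul0r SS0.
move=> /SS_gen [->|[n' [e' [h1' h2']]]]; first by rewrite mulr0 SS0.
apply: (SS_intro (n := (n + n')%N)); first lia.
split; first exact: mul_hdeg.
rewrite (fm_mul hP) h2 h2' -scalerAl -scalerAr scalerA; congr (_ *: _).
rewrite /lam -expfzDr //; congr (_ ^ _); rewrite mulnDl; lia.
Qed.

Lemma SS_W m n x : (x \in hdeg A n /\ x \in W A m) <->
  exists (s : seq int) (xs : int -> A),
    (forall p, p \in s -> p <= m /\ xs p \in SS (- p) (n%:Z + p)) /\
    x = \sum_(p <- s) xs p.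
Proof.
split.
- move=> [h1 h2]; have [s [ys [hy hs ->]]] := eig_decomp h1 h2.
  exists s, ys; split => // p hp; split; [exact: hs|exact/SS_eigp].
- move=> [s [xs [hs ->]]]; split.
    by apply: hdegsum => // p /hs [_ /SS_eigp [h _]].
  apply: Wsum => // p /hs [le /SS_eigp h]; exact: (Wle hA le (eig_W h)).
Qed.

Definition Rp (x : A) := exists L : seq ((int * int) * A),
  (forall u, u \in L -> u.2 \in SS u.1.1 u.1.2) /\ x = \sum_(u <- L) u.2.

Lemma Rp_sum (J : Type) (rs : seq J) (F : J -> A) :
  (forall j, Rp (F j)) -> Rp (\sum_(j <- rs) F j).
Proof.
move=> H; elim: rs => [|j rs [L [hL e]]].
  by exists [::]; split => //; rewrite !big_nil.
have [L1 [hL1 e1]] := H j; exists (L1 ++ L); split.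
  by move=> u; rewrite mem_cat => /orP [/hL1|/hL].
by rewrite big_cons big_cat e1 e.
Qed.

Lemma SS_span (x : A) : exists (s : seq (int * int)) (xs : int * int -> A),
  (forall i, xs i \in SS i.1 i.2) /\ x = \sum_(i <- s) xs i.
Proof.
have : Rp x.
  have [N [xs [hxs ->]]] := hdeg_span hA x.
  apply: Rp_sum => i; have [m hm] := W_exh hA (xs i).
  have [s [ys [hy _ ->]]] := eig_decomp (hxs i) hm.
  apply: Rp_sum => p; exists [:: ((- p, i%:Z + p), ys p)]; split.
    by move=> u; rewrite inE => /eqP -> /=; apply/SS_eigp.
  by rewrite big_cons big_nil addr0.
move=> [L [hL ->]].
have [s [xs [_ hxs e]]] := rep_conv (S := fun i : int * int => SS i.1 i.2)
  (fun i => SS0 _ _) (fun i x y hx hy => ltac:(by have := (SS_sub i.1 i.2).2 1 x y hx hy; rewrite scale1r)) hL.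
by exists s, xs.
Qed.

Lemma SS_indep (s : seq (int * int)) (xs : int * int -> A) : uniq s ->
  (forall i, xs i \in SS i.1 i.2) -> \sum_(i <- s) xs i = 0 ->
  forall i, i \in s -> xs i = 0.
Proof.
move=> us hxs hsum.
pose dg (i : int * int) := absz (i.1 + i.2).
pose N := (\max_(i <- s) dg i).+1.
pose ys n := \sum_(i <- s | n == dg i) xs i.
have hdg : forall i, (0 <= i.1 + i.2) = false -> xs i = 0.
  by move=> i hi; case: (SS_gen (hxs i)) => // [[n [e _]]]; move: hi; rewrite e.
have hys : forall n, ys n \in hdeg A n.
  move=> n; rewrite /ys -big_filter; apply: hdegsum => // i; rewrite mem_filter => /andP [/eqP -> _].
  case: (SS_gen (hxs i)) => [->|[n' [e [h1 _]]]]; first exact: hdeg0.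
  by rewrite /dg e.
have esum : \sum_(n < N) ys n = 0.
  apply: etrans _ hsum; rewrite -(big_mkord xpredT ys) /ys.
  rewrite (eq_bigr (fun n => \sum_(i <- s) (if n == dg i then xs i else 0))); last first.
    by move=> n _; rewrite big_mkcond.
  rewrite exchange_big /=; apply: eq_big_seq => i hi.
  by rewrite -big_mkcond big_nat1_eq /N ltnS leq_bigmax_seq.
have ys0 : forall n, (n < N)%N -> ys n = 0.
  by move=> n hn; exact: (hdeg_indep hA hys esum hn).
move=> i0 hi0.
case: (SS_gen (hxs i0)) => [//|[n0 [e0 [h10 h20]]]].
pose T := [seq i <- s | (n0 == dg i) && (0 <= i.1 + i.2)].
have eT : \sum_(i <- T) xs i = 0.
  rewrite big_filter big_mkcondr /=.
  have hn0 : (n0 < N)%N by rewrite /N ltnS (_ : n0 = dg i0) ?leq_bigmax_seq // /dg e0.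
  apply: etrans (ys0 n0 hn0); rewrite /ys.
  by apply: eq_bigr => i _; case: ifP => // h; rewrite hdg.
apply: (@eig_indep _ T (fun i => lm n0 (- i.1)) xs (filter_uniq _ us) _ _ eT).
- move=> [a b] [a' b']; rewrite !mem_filter /= => /andP [/andP [/eqP d1 p1] _].
  move=> /andP [/andP [/eqP d2 p2] _] /lm_inj e.
  have e1 : a + b = n0%:Z by rewrite d1 /dg /= gez0_abs.
  have e2 : a' + b' = n0%:Z by rewrite d2 /dg /= gez0_abs.
  congr pair; lia.
- move=> [a b]; rewrite mem_filter /= => /andP [/andP [/eqP d1 p1] _].
  case: (SS_gen (hxs (a, b))) => [->|[n [e [_ h2]]]]; first by rewrite (f0 hP) scaler0.
  have -> : n0 = n by move: d1; rewrite /dg /= e.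
  exact: h2.
- by rewrite mem_filter hi0 /dg e0 eqxx /=.
Qed.

Lemma SS_split : is_rsplitting r SS.
Proof.
split.
- exact: SS_sub.
- exact: SS_span.
- exact: SS_indep.
- exact: SS_d.
- exact: SS_mul.
- exact: SS_W.
Qed.
End Eig.

Lemma three_one (k : fieldType) (r : nat) (A B : fdga k) (f : A -> B) :
  is_fdga A -> is_fdga B -> is_fmor f -> Dr A r -> Dr B r ->
  bigrading_lift r f -> admits_rsplitting r f.
Proof.
move=> hA hB hf DA DB [al [a0 aro [FA [FB [hFA hFB hc EA EB]]]]].
exists (SS r al FA), (SS r al FB); split.
- exact: (SS_split hA DA a0 aro hFA.1 EA).
- exact: (SS_split hB DB a0 aro hFB.1 EB).
move=> a b x /SS_gen [->|[n [e [h1 h2]]]].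
  by rewrite (f0 hf) (@SS0 k B r al FB hB hFB.1 a b).
apply: (SS_intro (n := n)) => //; split; first exact: (fm_deg hf h1).
by rewrite -hc h2 (fZ hf).
Qed.


Lemma sum_supp (I : eqType) (V : zmodType) (c : I -> V) (s t : seq I) :
  uniq s -> uniq t -> (forall j, j \notin s -> c j = 0) -> {subset s <= t} ->
  \sum_(j <- t) c j = \sum_(j <- s) c j.
Proof.
move=> us ut hc st.
rewrite (bigID (fun j => j \in s)) /= [X in _ + X]big1 ?addr0; last by move=> j /negbTE h; apply: hc; rewrite h.
rewrite -big_filter; apply: perm_big; apply: uniq_perm => //; first exact: filter_uniq.
by move=> j; rewrite mem_filter; case: (boolP (j \in s)) => // /st ->.
Qed.

Lemma sum_supp2 (I : eqType) (V : zmodType) (c : I -> V) (s t : seq I) :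
  uniq s -> uniq t -> (forall j, j \notin s -> c j = 0) -> (forall j, j \notin t -> c j = 0) ->
  \sum_(j <- t) c j = \sum_(j <- s) c j.
Proof.
move=> us ut hs ht.
rewrite -(@sum_supp _ _ c s (undup (s ++ t))) ?undup_uniq //; last first.
  by move=> j hj; rewrite mem_undup mem_cat hj.
by rewrite (@sum_supp _ _ c t (undup (s ++ t))) ?undup_uniq // => j hj; rewrite mem_undup mem_cat hj orbT.
Qed.

Section Split.
Variables (k : fieldType) (A : fdga k) (r : nat) (S : int -> int -> pred A).
Hypothesis hA : is_fdga A.
Hypothesis hS : is_rsplitting r S.

Definition pc (j : nat * int) : pred A := S (- j.2) (j.1%:Z + j.2).

Lemma pc_sub j : is_subspace (pc j). Proof. exact: (sp_sub hS (- j.2) (j.1%:Z + j.2)). Qed.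
Lemma pc0 j : (0 : A) \in pc j. Proof. exact: (@sub0 k A _ (pc_sub j)). Qed.
Lemma pcD j (x y : A) : x \in pc j -> y \in pc j -> x + y \in pc j.
Proof. exact: (@subD k A _ (pc_sub j)). Qed.
Lemma pcZ j a (x : A) : x \in pc j -> a *: x \in pc j.
Proof. exact: (@subZ k A _ (pc_sub j)). Qed.
Lemma pcB j (x y : A) : x \in pc j -> y \in pc j -> x - y \in pc j.
Proof. exact: (@subB k A _ (pc_sub j)). Qed.

Lemma pc_HW j x : x \in pc j -> x \in hdeg A j.1 /\ x \in W A j.2.
Proof.
move=> h; apply/(sp_W hS); exists [:: j.2], (fun _ => x); split.
  by move=> p; rewrite inE => /eqP ->.
by rewrite big_cons big_nil addr0.
Qed.

Lemma pc_mul i i' x y : x \in pc i -> y \in pc i' -> x * y \in pc ((i.1 + i'.1)%N, i.2 + i'.2).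
Proof.
move=> hx hy; have := sp_mul hS hx hy; rewrite /pc /=.
have -> : - i.2 + - i'.2 = - (i.2 + i'.2) by rewrite opprD.
have -> // : i.1%:Z + i.2 + (i'.1%:Z + i'.2) = (i.1 + i'.1)%N%:Z + (i.2 + i'.2).
by lia.
Qed.

Lemma pc_d i x : x \in pc i -> dd A x \in pc (i.1.+1, i.2 - r%:Z).
Proof.
move=> hx; have := sp_d hS hx; rewrite /pc /=.
have -> : - i.2 + r%:Z = - (i.2 - r%:Z) by rewrite opprB addrC.
have -> // : i.1%:Z + i.2 - r%:Z + 1 = (i.1.+1)%:Z + (i.2 - r%:Z).
by lia.
Qed.

Definition Dec (x : A) (c : nat * int -> A) := exists s : seq (nat * int),
  [/\ uniq s, forall j, j \notin s -> c j = 0, forall j, c j \in pc j & x = \sum_(j <- s) c j].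

Lemma Dec0 : Dec 0 (fun _ => 0).
Proof. by exists [::]; split => // [j|]; [exact: pc0|rewrite big_nil]. Qed.

Lemma DecD x y c c' : Dec x c -> Dec y c' -> Dec (x + y) (fun j => c j + c' j).
Proof.
move=> [s [us hs hc ->]] [s' [us' hs' hc' ->]].
exists (undup (s ++ s')); split.
- exact: undup_uniq.
- move=> j; rewrite mem_undup mem_cat negb_or => /andP [h1 h2]; by rewrite hs // hs' // addr0.
- by move=> j; apply: pcD.
rewrite big_split /= (@sum_supp _ _ c s (undup (s ++ s'))) ?undup_uniq //; last by move=> j hj; rewrite mem_undup mem_cat hj.
by rewrite (@sum_supp _ _ c' s' (undup (s ++ s'))) ?undup_uniq // => j hj; rewrite mem_undup mem_cat hj orbT.
Qed.

Lemma DecZ a x c : Dec x c -> Dec (a *: x) (fun j => a *: c j).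
Proof.
move=> [s [us hs hc ->]]; exists s; split => //.
- by move=> j /hs ->; rewrite scaler0.
- by move=> j; apply: pcZ.
by rewrite scaler_sumr.
Qed.

Lemma Dec1 j y : y \in pc j -> Dec y (fun i => if i == j then y else 0).
Proof.
move=> hy; exists [:: j]; split => //.
- by move=> i; rewrite inE => /negbTE ->.
- by move=> i; case: eqP => [->|_] //; exact: pc0.
by rewrite big_cons big_nil eqxx addr0.
Qed.

Lemma Dec_uniq x c c' : Dec x c -> Dec x c' -> c =1 c'.
Proof.
move=> [s [us hs hc ex]] [s' [us' hs' hc' ex']].
pose t := undup (s ++ s').
have ht : \sum_(j <- t) (c j - c' j) = 0.
  rewrite sumrB (@sum_supp _ _ c s t) ?undup_uniq //; last by move=> j hj; rewrite mem_undup mem_cat hj.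
  rewrite (@sum_supp _ _ c' s' t) ?undup_uniq //; last by move=> j hj; rewrite mem_undup mem_cat hj orbT.
  by rewrite -ex -ex' subrr.
pose idx (j : nat * int) := (- j.2, j.1%:Z + j.2).
pose xs (i : int * int) := if 0 <= i.1 + i.2 then
  c (absz (i.1 + i.2), - i.1) - c' (absz (i.1 + i.2), - i.1) else 0.
have xsidx : forall j, xs (idx j) = c j - c' j.
  move=> [n p]; rewrite /xs /idx /= (_ : - p + (n%:Z + p) = n%:Z); last by lia.
  by rewrite /= opprK.
have hxs : forall i, xs i \in S i.1 i.2.
  move=> [a b]; rewrite /xs /=; case: ifP => h; last exact: (@sub0 k A _ (sp_sub hS a b)).
  have := pcB (hc (absz (a + b), - a)) (hc' (absz (a + b), - a)); rewrite /pc /= opprK.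
  by rewrite gez0_abs // (_ : a + b - a = b) //; lia.
have uidx : uniq (map idx t).
  rewrite map_inj_uniq ?undup_uniq // => [[n p] [n' p']]; rewrite /idx /= => [[e1 e2]].
  congr pair; lia.
have H := sp_indep hS uidx hxs (ltac:(by rewrite big_map (eq_bigr _ (fun j _ => xsidx j)))).
move=> j; case: (boolP (j \in t)) => hj.
  by apply/eqP; rewrite -subr_eq0 -xsidx; apply/eqP; apply: H; rewrite map_f.
move: hj; rewrite mem_undup mem_cat negb_or => /andP [h1 h2]; by rewrite hs // hs'.
Qed.

Lemma Dec_ex x : exists c, Dec x c.
Proof.
have Hsum : forall (J : eqType) (rs : seq J) (F : J -> A), (forall j, j \in rs -> exists c, Dec (F j) c) ->
    exists c, Dec (\sum_(j <- rs) F j) c.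
  move=> J rs F; elim: rs => [|j rs IH] H; first by exists (fun _ => 0); rewrite big_nil; exact: Dec0.
  have [c hc] := IH (fun i hi => H i (ltac:(by rewrite inE hi orbT))).
  have [c' hc'] := H j (mem_head _ _); rewrite big_cons; exists (fun i => c' i + c i); exact: DecD.
have [N [xs [hxs ->]]] := hdeg_span hA x.
apply: (Hsum) => i _; have [m hm] := W_exh hA (xs i).
have [s [ys [hy ->]]] := (sp_W hS m i (xs i)).1 (conj (hxs i) hm).
apply: Hsum => p hp.
by exists (fun j => if j == (i : nat, p) then ys p else 0); apply: Dec1; exact: (hy p hp).2.
Qed.

Definition P (j : nat * int) (x : A) : A := proj1_sig (constructive_indefinite_description _ (Dec_ex x)) j.

Lemma Pdec x : Dec x (fun j => P j x).
Proof. by rewrite /P; case: (constructive_indefinite_description _ _). Qed.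

Lemma PE x c : Dec x c -> forall j, P j x = c j.
Proof. by move=> h j; apply: (Dec_uniq (Pdec x) h). Qed.

Lemma Ppc j x : P j x \in pc j. Proof. by have [s [_ _ h _]] := Pdec x. Qed.

Lemma Pon j j' y : y \in pc j' -> P j y = if j == j' then y else 0.
Proof. by move=> h; rewrite (PE (Dec1 h)). Qed.

Lemma Pid j x : P j (P j x) = P j x.
Proof. by rewrite (Pon j (Ppc j x)) eqxx. Qed.

Lemma PD j x y : P j (x + y) = P j x + P j y.
Proof. by rewrite (PE (DecD (Pdec x) (Pdec y))). Qed.

Lemma PZ j a x : P j (a *: x) = a *: P j x.
Proof. by rewrite (PE (DecZ a (Pdec x))). Qed.

Lemma Plin j a x y : P j (a *: x + y) = a *: P j x + P j y.
Proof. by rewrite PD PZ. Qed.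

Lemma P0 j : P j 0 = 0. Proof. exact: (@lin0 k A A _ (Plin j)). Qed.
Lemma PN j x : P j (- x) = - P j x. Proof. exact: (@linN k A A _ (Plin j)). Qed.
Lemma PB j x y : P j (x - y) = P j x - P j y. Proof. exact: (@linB k A A _ (Plin j)). Qed.
Lemma Psum j (I : Type) (s : seq I) (F : I -> A) : P j (\sum_(i <- s) F i) = \sum_(i <- s) P j (F i).
Proof. exact: (@linsum k A A _ (Plin j)). Qed.

Lemma Pext0 x : (forall j, P j x = 0) -> x = 0.
Proof. by move=> h; have [s [_ _ _ ->]] := Pdec x; rewrite big1. Qed.

Lemma Pext x y : (forall j, P j x = P j y) -> x = y.
Proof. by move=> h; apply/eqP; rewrite -subr_eq0; apply/eqP; apply: Pext0 => j; rewrite PB h subrr. Qed.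

Lemma P_HW n m x j : x \in hdeg A n -> x \in W A m -> (j.1 != n) || (m < j.2) -> P j x = 0.
Proof.
move=> h1 h2 hj; have [s [xs [hs ->]]] := (sp_W hS m n x).1 (conj h1 h2).
rewrite Psum big1_seq // => p /andP [_ hp]; have [le hx] := hs p hp.
rewrite (Pon j (j' := (n, p)) hx); case: eqP => // ej; move: hj; rewrite ej /=.
by rewrite eqxx /= ltNge le.
Qed.

Lemma P_W m x j : x \in W A m -> m < j.2 -> P j x = 0.
Proof.
move=> h hj; have [N [xs [hxs ->]]] := W_graded hA h.
rewrite Psum big1 // => i _; have [h1 h2] := hxs i; apply: (P_HW h1 h2); by rewrite hj orbT.
Qed.

Lemma P_hdeg n x j : x \in hdeg A n -> j.1 != n -> P j x = 0.
Proof. move=> h hj; have [m hm] := W_exh hA x; apply: (P_HW h hm); by rewrite hj. Qed.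

Lemma P_low n m x : x \in hdeg A n -> x \in W A m -> P (n, m) x = 0 -> x \in W A (m - 1).
Proof.
move=> h1 h2; have [s [xs [hs ex]]] := (sp_W hS m n x).1 (conj h1 h2).
have ePx : P (n, m) x = \sum_(p <- s | p == m) xs p.
  rewrite ex Psum [RHS]big_mkcond /=; apply: eq_big_seq => p hp.
  rewrite (Pon _ (j' := (n, p)) (hs p hp).2) /=; case: eqP => [[->]|]; first by rewrite eqxx.
  by case: eqP => // ->.
rewrite ePx => e0; rewrite ex (bigID (fun p => p == m)) /= e0 add0r.
rewrite -big_filter; apply: Wsum => // p; rewrite mem_filter => /andP [hne hp].
have [le hx] := hs p hp; have [_ hw] := @pc_HW (n, p) _ hx.
apply: (Wle hA _ hw); move: hne le; rewrite /=; lia.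
Qed.

Lemma P_rest n m x : x \in hdeg A n -> x \in W A m ->
  x - P (n, m) x \in hdeg A n /\ x - P (n, m) x \in W A (m - 1).
Proof.
move=> h1 h2; have [q1 q2] := pc_HW (Ppc (n, m) x).
have r1 : x - P (n, m) x \in hdeg A n by apply: hdegB.
split => //; apply: (P_low r1); first by apply: WB.
by rewrite PB Pid subrr.
Qed.

Lemma P_mulHW n n' p q u v : u \in hdeg A n -> u \in W A p -> v \in hdeg A n' -> v \in W A q ->
  P ((n + n')%N, p + q) (u * v) = P (n, p) u * P (n', q) v.
Proof.
move=> u1 u2 v1 v2.
have [a1 a2] := P_rest u1 u2; have [b1 b2] := P_rest v1 v2.
have [c1 c2] := pc_HW (Ppc (n, p) u); have [d1 d2] := pc_HW (Ppc (n', q) v).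
have -> : u * v = P (n, p) u * P (n', q) v + (P (n, p) u * (v - P (n', q) v) +
   ((u - P (n, p) u) * P (n', q) v + (u - P (n, p) u) * (v - P (n', q) v))).
  by rewrite -mulrDr [P (n', q) v + _]addrC subrK addrA -mulrDr [P (n', q) v + _]addrC subrK -mulrDl [P (n, p) u + _]addrC subrK.
rewrite !PD (Pon _ (pc_mul (Ppc (n, p) u) (Ppc (n', q) v))) /= eqxx.
have hz : forall z, z \in hdeg A (n + n') -> z \in W A (p + q - 1) -> P ((n + n')%N, p + q) z = 0.
  by move=> z z1 z2; apply: (P_HW z1 z2); rewrite /= ltrBlDr ltrDl ltr01 orbT.
rewrite (hz (P (n, p) u * (v - P (n', q) v))); last first.
  by apply: (Wle hA _ (W_mul hA c2 b2)); rewrite /=; lia.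
  exact: mul_hdeg.
rewrite (hz ((u - P (n, p) u) * P (n', q) v)); last first.
  by apply: (Wle hA _ (W_mul hA a2 d2)); rewrite /=; lia.
  exact: mul_hdeg.
rewrite (hz ((u - P (n, p) u) * (v - P (n', q) v))); last first.
  by apply: (Wle hA _ (W_mul hA a2 b2)); rewrite /=; lia.
  exact: mul_hdeg.
by rewrite !addr0.
Qed.

Lemma P_dHW (DA : Dr A r) n p u : u \in hdeg A n -> u \in W A p ->
  P (n.+1, p - r%:Z) (dd A u) = dd A (P (n, p) u).
Proof.
move=> u1 u2; have [a1 a2] := P_rest u1 u2.
have -> : dd A u = dd A (P (n, p) u) + dd A (u - P (n, p) u) by rewrite -ddD // addrC subrK.
rewrite PD (Pon _ (pc_d (Ppc (n, p) u))) /= eqxx (P_HW (dd_hdeg hA a1) (DA _ _ a2)) ?addr0 //.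
by apply/orP; right; rewrite /=; lia.
Qed.

Lemma P_one : P (0%N, 0) 1 = 1.
Proof.
have hy : forall j y, y \in pc j -> P (0%N, 0) 1 * y = y.
  move=> [n p] y hy; have [y1 y2] := pc_HW hy.
  have := P_mulHW (one_hdeg hA) (W_one hA) y1 y2.
  rewrite add0n add0r mul1r (Pon (n, p) hy) eqxx.
  by move=> e; rewrite -e.
have [s [_ _ _ e1]] := Pdec 1.
have e0 : P (0%N, 0) 1 * (\sum_(j <- s) P j 1) = \sum_(j <- s) P j 1.
  by rewrite mulr_sumr; apply: eq_bigr => j _; apply: hy; exact: Ppc.
by rewrite -e1 mulr1 in e0.
Qed.

Lemma ex_supp x : exists s : seq (nat * int), uniq s /\ forall j, j \notin s -> P j x = 0.
Proof. by have [s [us hs _ _]] := Pdec x; exists s. Qed.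

Definition supp x := proj1_sig (constructive_indefinite_description _ (ex_supp x)).

Lemma suppP x : uniq (supp x) /\ forall j, j \notin supp x -> P j x = 0.
Proof. by rewrite /supp; case: (constructive_indefinite_description _ _). Qed.

Section Mk.
Variable T : nat * int -> A -> A.
Hypothesis hT0 : forall j, T j 0 = 0.
Hypothesis hTp : forall j x, x \in pc j -> T j x \in pc j.

Definition Mk x := \sum_(j <- supp x) T j (P j x).

Lemma Mk_any x t : uniq t -> (forall j, j \notin t -> P j x = 0) ->
  Mk x = \sum_(j <- t) T j (P j x).
Proof.
move=> ut ht; have [us hs] := suppP x; rewrite /Mk.
apply: (@sum_supp2 _ _ (fun j => T j (P j x))) => // j hj; first by rewrite ht // hT0.
by rewrite hs // hT0.
Qed.

Lemma P_Mk j x : P j (Mk x) = T j (P j x).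
Proof.
have [us hs] := suppP x; rewrite /Mk Psum.
case: (boolP (j \in supp x)) => hj.
  rewrite (bigD1_seq j) //= (Pon _ (hTp (Ppc j x))) eqxx big1 ?addr0 //.
  by move=> i /negbTE hi; rewrite (Pon _ (hTp (Ppc i x))) eq_sym hi.
rewrite big1_seq; first by rewrite hs // hT0.
move=> i /andP [_ hi]; rewrite (Pon _ (hTp (Ppc i x))); case: eqP => // e.
by move: hj; rewrite e hi.
Qed.

Lemma Mk_piece j y : y \in pc j -> Mk y = T j y.
Proof.
move=> hy; rewrite (@Mk_any y [:: j]) //.
  by rewrite big_cons big_nil addr0 (Pon _ hy) eqxx.
by move=> i; rewrite inE => /negbTE hi; rewrite (Pon _ hy) hi.
Qed.

Lemma Mk_W m x : x \in W A m -> Mk x \in W A m.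
Proof.
move=> hx; rewrite /Mk; apply: Wsum => // j _.
case: (ltrP m j.2) => h; first by rewrite (P_W hx h) hT0; exact: W0.
by have [_ hw] := pc_HW (hTp (Ppc j x)); apply: (Wle hA h hw).
Qed.

Lemma Mk_hdeg n x : x \in hdeg A n -> Mk x \in hdeg A n.
Proof.
move=> hx; rewrite /Mk; apply: hdegsum => // j _.
case: (eqVneq j.1 n) => h; last by rewrite (P_hdeg hx h) hT0; exact: hdeg0.
by have [hw _] := pc_HW (hTp (Ppc j x)); rewrite -h.
Qed.

Lemma Mk_lin : (forall j a x y, x \in pc j -> y \in pc j -> T j (a *: x + y) = a *: T j x + T j y) ->
  forall a x y, Mk (a *: x + y) = a *: Mk x + Mk y.
Proof.
move=> hl a x y; apply: Pext => j.
by rewrite PD PZ !P_Mk PD PZ hl //; apply: Ppc.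
Qed.
End Mk.

Lemma Mk_cancel T T' : (forall j, T j 0 = 0) -> (forall j x, x \in pc j -> T j x \in pc j) ->
  (forall j, T' j 0 = 0) -> (forall j x, x \in pc j -> T' j x \in pc j) ->
  (forall j y, y \in pc j -> T j (T' j y) = y) -> cancel (Mk T') (Mk T).
Proof.
move=> h0 hp h0' hp' hc x; apply: Pext => j.
by rewrite (P_Mk h0 hp) (P_Mk h0' hp') hc //; exact: Ppc.
Qed.
End Split.


Lemma inv_fmor (k : fieldType) (A : fdga k) (F G : A -> A) : is_fmor F ->
  cancel F G -> cancel G F -> (forall n x, x \in hdeg A n -> G x \in hdeg A n) ->
  (forall p x, x \in W A p -> G x \in W A p) -> is_fmor G.
Proof.
move=> hF FG GF hd hw; have Fi := can_inj FG.
split => //.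
- by move=> a x y; apply: Fi; rewrite GF (fm_lin hF) !GF.
- by move=> x y; apply: Fi; rewrite GF (fm_mul hF) !GF.
- by apply: Fi; rewrite GF (fm_one hF).
- by move=> x; apply: Fi; rewrite GF (fm_dd hF) GF.
Qed.

Section Lift.
Variables (k : fieldType) (A : fdga k) (r : nat) (S : int -> int -> pred A)
  (g : int -> nat -> A -> A).
Hypothesis hA : is_fdga A.
Hypothesis DA : Dr A r.
Hypothesis hS : is_rsplitting r S.
Hypothesis hg : is_Er_aut r g.

Local Notation P := (P hA hS).
Local Notation pc := (pc S).

Lemma ZrI p n x : x \in hdeg A n -> x \in W A p -> x \in Zr A r%:Z p n.
Proof. by move=> h1 h2; rewrite (Zr_Dr DA) h1 h2. Qed.

Lemma ZrE p n x : x \in Zr A r%:Z p n -> x \in hdeg A n /\ x \in W A p.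
Proof. by rewrite (Zr_Dr DA) => /andP. Qed.

Lemma PBr p n y : Br A r%:Z p n y -> P (n, p) y = 0.
Proof.
move=> /(Br_Dr hA DA) [h1 h2]; apply: (P_HW hA hS h1 h2); by apply/orP; right; rewrite /=; lia.
Qed.

Lemma BrD p n y1 y2 : Br A r%:Z p n y1 -> Br A r%:Z p n y2 -> Br A r%:Z p n (y1 + y2).
Proof.
move=> /(Br_Dr hA DA) [a1 a2] /(Br_Dr hA DA) [b1 b2]; apply/(Br_Dr hA DA).
by split; [apply: hdegD|apply: WD].
Qed.

Lemma BrN p n y : Br A r%:Z p n y -> Br A r%:Z p n (- y).
Proof.
move=> /(Br_Dr hA DA) [a1 a2]; apply/(Br_Dr hA DA).
by split; [apply: hdegN|apply: WN].
Qed.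

Lemma gZ p n x : x \in hdeg A n -> x \in W A p -> g p n x \in hdeg A n /\ g p n x \in W A p.
Proof. by move=> h1 h2; apply: ZrE; apply: (ea_Z hg); apply: ZrI. Qed.

Lemma g0 p n : Br A r%:Z p n (g p n 0).
Proof.
have z0 : (0 : A) \in Zr A r%:Z p n by apply: ZrI; [exact: hdeg0|exact: W0].
have := ea_lin hg 1 z0 z0; rewrite !scale1r addr0 opprD addrA subrr add0r.
by move/BrN; rewrite opprK.
Qed.

Lemma gP p n x : x \in hdeg A n -> x \in W A p -> P (n, p) (g p n x) = P (n, p) (g p n (P (n, p) x)).
Proof.
move=> h1 h2; have [r1 r2] := P_rest hA hS h1 h2.
have [c1 c2] := pc_HW hS (Ppc hA hS (n, p) x).
have zx : P (n, p) x \in Zr A r%:Z p n by apply: ZrI.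
have zr : x - P (n, p) x \in Zr A r%:Z p n by apply: ZrI => //; apply: (Wle hA _ r2); lia.
have e : 1 *: P (n, p) x + (x - P (n, p) x) = x by rewrite scale1r addrC subrK.
have := ea_lin hg 1 zx zr; rewrite e => hl.
have hb : Br A r%:Z p n (g p n (x - P (n, p) x)).
  by apply: (ea_wd hg zr); apply/(Br_Dr hA DA).
have := BrD hl hb.
rewrite scale1r opprD addrA subrK => /PBr.
by rewrite (PB hA hS) => /eqP; rewrite subr_eq0 => /eqP.
Qed.

Definition T (j : nat * int) (y : A) := P j (g j.2 j.1 y).

Lemma T0 j : T j 0 = 0.
Proof. by case: j => n p; rewrite /T /=; apply: PBr; exact: g0. Qed.

Lemma Tp j x : x \in pc j -> T j x \in pc j.
Proof. by move=> _; exact: Ppc. Qed.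

Lemma Tlin j a x y : x \in pc j -> y \in pc j -> T j (a *: x + y) = a *: T j x + T j y.
Proof.
case: j => n p hx hy; have [x1 x2] := pc_HW hS hx; have [y1 y2] := pc_HW hS hy.
have := ea_lin hg a (ZrI x1 x2) (ZrI y1 y2) => /PBr.
by rewrite /T /= (PB hA hS) (PD hA hS) (PZ hA hS) => /eqP; rewrite subr_eq0 => /eqP.
Qed.

Definition FA := Mk hA hS T.

Lemma FA_piece j y : y \in pc j -> FA y = T j y.
Proof. exact: (Mk_piece hA hS T0). Qed.

Lemma FA_lin a x y : FA (a *: x + y) = a *: FA x + FA y.
Proof. exact: (Mk_lin hA hS T0 Tp Tlin). Qed.

Lemma FA_sum (I : Type) (s : seq I) (F : I -> A) : FA (\sum_(i <- s) F i) = \sum_(i <- s) FA (F i).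
Proof. exact: (@linsum k A A _ FA_lin). Qed.

Lemma FA_hdeg n x : x \in hdeg A n -> FA x \in hdeg A n.
Proof. exact: (Mk_hdeg hA hS T0 Tp). Qed.

Lemma FA_W p x : x \in W A p -> FA x \in W A p.
Proof. exact: (Mk_W hA hS T0 Tp). Qed.

Lemma FA_mul x y : FA (x * y) = FA x * FA y.
Proof.
have [s [_ _ hs ex]] := Pdec hA hS x; have [s' [_ _ hs' ey]] := Pdec hA hS y.
have key : forall i i' u v, u \in pc i -> v \in pc i' -> FA (u * v) = FA u * FA v.
  move=> [n p] [n' q] u v hu hv.
  rewrite (FA_piece (pc_mul hS hu hv)) (FA_piece hu) (FA_piece hv) /T /=.
  have [u1 u2] := pc_HW hS hu; have [v1 v2] := pc_HW hS hv.
  have := ea_mul hg (ZrI u1 u2) (ZrI v1 v2) => /PBr.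
  rewrite (PB hA hS) => /eqP; rewrite subr_eq0 => /eqP ->.
  have [g1 g2] := gZ u1 u2; have [h1 h2] := gZ v1 v2.
  exact: (P_mulHW hA hS g1 g2 h1 h2).
have -> : x * y = \sum_(i <- s) \sum_(i' <- s') P i x * P i' y.
  by rewrite {1}ex {1}ey mulr_suml; apply: eq_bigr => i _; rewrite mulr_sumr.
have -> : FA x * FA y = \sum_(i <- s) \sum_(i' <- s') FA (P i x) * FA (P i' y).
  rewrite {1}ex {1}ey !FA_sum mulr_suml; apply: eq_bigr => i _; by rewrite mulr_sumr.
rewrite FA_sum; apply: eq_bigr => i _; rewrite FA_sum; apply: eq_bigr => i' _.
exact: key.
Qed.

Lemma FA_one : FA 1 = 1.
Proof.
have h1 : (1 : A) \in pc (0%N, 0) by rewrite -(P_one hA hS); exact: Ppc.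
rewrite (FA_piece h1) /T /=.
have := ea_one hg => /PBr; rewrite (PB hA hS) => /eqP; rewrite subr_eq0 => /eqP ->.
exact: P_one.
Qed.

Lemma FA_dd x : FA (dd A x) = dd A (FA x).
Proof.
have [s [_ _ hs ex]] := Pdec hA hS x.
have key : forall i u, u \in pc i -> FA (dd A u) = dd A (FA u).
  move=> [n p] u hu; rewrite (FA_piece (pc_d hS hu)) (FA_piece hu) /T /=.
  have [u1 u2] := pc_HW hS hu.
  have := ea_d hg (ZrI u1 u2) => /PBr; rewrite (PB hA hS) => /eqP; rewrite subr_eq0 => /eqP ->.
  have [g1 g2] := gZ u1 u2; exact: (P_dHW hA hS DA g1 g2).
have -> : dd A x = \sum_(j <- s) dd A (P j x) by rewrite {1}ex (ddsum hA).
have -> : FA x = \sum_(j <- s) FA (P j x) by rewrite {1}ex FA_sum.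
by rewrite FA_sum (ddsum hA); apply: eq_bigr => j _; apply: key.
Qed.

Lemma FA_Er : Er_is r FA g.
Proof.
move=> p n x hx; have [h1 h2] := ZrE hx; apply/(Br_Dr hA DA).
have f1 := FA_hdeg h1; have f2 := FA_W h2; have [g1 g2] := gZ h1 h2.
have d1 : FA x - g p n x \in hdeg A n by apply: hdegB.
have d2 : FA x - g p n x \in W A p by apply: WB.
split => //; apply: (@P_low _ _ _ _ hA hS _ _ _ d1 d2).
by rewrite (PB hA hS) (P_Mk hA hS T0 Tp) /T /= -(gP h1 h2) subrr.
Qed.

Lemma xsel_ex (j : nat * int) (y : A) : exists x, y \in Zr A r%:Z j.2 j.1 ->
  x \in Zr A r%:Z j.2 j.1 /\ Br A r%:Z j.2 j.1 (g j.2 j.1 x - y).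
Proof.
case: (boolP (y \in Zr A r%:Z j.2 j.1)) => hy.
  by have [x hx hb] := ea_surj hg hy; exists x.
by exists 0.
Qed.

Definition xsel j y := proj1_sig (constructive_indefinite_description _ (xsel_ex j y)).

Lemma xselP j y : y \in Zr A r%:Z j.2 j.1 ->
  xsel j y \in Zr A r%:Z j.2 j.1 /\ Br A r%:Z j.2 j.1 (g j.2 j.1 (xsel j y) - y).
Proof. by rewrite /xsel; case: (constructive_indefinite_description _ _). Qed.

Lemma Pg0 n p z : z \in Zr A r%:Z p n -> P (n, p) (g p n z) = 0 -> P (n, p) z = 0.
Proof.
move=> hz e; have [z1 z2] := ZrE hz; have [g1 g2] := gZ z1 z2.
have hw := @P_low _ _ _ _ hA hS _ _ _ g1 g2 e.
have hb : Br A r%:Z p n (g p n z) by apply/(Br_Dr hA DA).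
exact: PBr (ea_inj hg hz hb).
Qed.

Definition T' (j : nat * int) (y : A) := P j (xsel j y).

Lemma T'0 j : T' j 0 = 0.
Proof.
case: j => n p; rewrite /T'.
have z0 : (0 : A) \in Zr A r%:Z p n by apply: ZrI; [exact: hdeg0|exact: W0].
have [hx hb] := @xselP (n, p) _ z0; rewrite subr0 /= in hb.
exact: Pg0 hx (PBr hb).
Qed.

Lemma T'p j x : x \in pc j -> T' j x \in pc j.
Proof. by move=> _; exact: Ppc. Qed.

Lemma TT' j y : y \in pc j -> T j (T' j y) = y.
Proof.
case: j => n p hy; have [y1 y2] := pc_HW hS hy.
have [hx hb] := @xselP (n, p) _ (ZrI y1 y2); have [x1 x2] := ZrE hx.
rewrite /T /T' /= -(gP x1 x2).
have := PBr hb; rewrite (PB hA hS) => /eqP; rewrite subr_eq0 => /eqP ->.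
by rewrite (Pon hA hS _ hy) eqxx.
Qed.

Lemma T'T j y : y \in pc j -> T' j (T j y) = y.
Proof.
case: j => n p hy; have [y1 y2] := pc_HW hS hy.
set w := T (n, p) y.
have hw : w \in pc (n, p) by exact: Ppc.
have [w1 w2] := pc_HW hS hw.
have [hx hb] := @xselP (n, p) _ (ZrI w1 w2); have [x1 x2] := ZrE hx.
rewrite /T' /=; set x := xsel (n, p) w in hx hb x1 x2 *.
have e1 : P (n, p) (g p n x) = w.
  have := PBr hb; rewrite (PB hA hS) => /eqP; rewrite subr_eq0 => /eqP ->.
  by rewrite (Pon hA hS _ hw) eqxx.
have zy := ZrI y1 y2.
have hz : x - y \in Zr A r%:Z p n by apply: ZrI; [apply: hdegB|apply: WB].
have e : -1 *: y + x = x - y by rewrite scaleN1r addrC.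
have := ea_lin hg (-1) zy hx; rewrite /= e => /PBr.
rewrite (PB hA hS) (PD hA hS) (PZ hA hS) e1 -/w scaleN1r addNr subr0 => e3.
have := Pg0 hz e3; rewrite (PB hA hS) => /eqP; rewrite subr_eq0 => /eqP ->.
by rewrite (Pon hA hS _ hy) eqxx.
Qed.

Definition GA := Mk hA hS T'.

Lemma FA_fmor : is_fmor FA.
Proof.
split.
- exact: FA_lin.
- exact: FA_mul.
- exact: FA_one.
- exact: FA_hdeg.
- exact: FA_dd.
- exact: FA_W.
Qed.

Lemma FA_auto : is_fauto FA.
Proof.
have c1 : cancel FA GA := Mk_cancel hA hS T'0 T'p T0 Tp T'T.
have c2 : cancel GA FA := Mk_cancel hA hS T0 Tp T'0 T'p TT'.
split; first exact: FA_fmor.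
exists GA; split => //; apply: (inv_fmor FA_fmor c1 c2).
- exact: (Mk_hdeg hA hS T'0 T'p).
- exact: (Mk_W hA hS T'0 T'p).
Qed.
End Lift.


Lemma one_two (k : fieldType) (r : nat) (A B : fdga k) (f : A -> B) :
  is_fdga A -> is_fdga B -> is_fmor f -> Dr A r -> Dr B r ->
  admits_rsplitting r f -> Er_surjective r f.
Proof.
move=> hA hB hf DA DB [SA [SB [hSA hSB hc]]] gA gB hgA hgB hcomp.
have Pf : forall j x, P hB hSB j (f x) = f (P hA hSA j x).
  move=> j x; apply: (@PE _ _ _ _ hB hSB (f x) (fun i => f (P hA hSA i x))); have [s [us hs hp ex]] := Pdec hA hSA x.
  exists s; split => //.
  - by move=> i /hs ->; rewrite (f0 hf).
  - by move=> i; apply: hc; exact: hp i.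
  - by rewrite {1}ex (fsum hf).
exists (FA gA hA hSA), (FA gB hB hSB); split.
- exact: FA_auto.
- exact: FA_auto.
- move=> x; apply: (@Pext _ _ _ _ hB hSB) => j.
  rewrite Pf (P_Mk hA hSA (T0 hA DA hSA hgA) (Tp gA hA hSA)).
  rewrite (P_Mk hB hSB (T0 hB DB hSB hgB) (Tp gB hB hSB)) Pf.
  case: j => n p; rewrite /T /=.
  set u := P hA hSA (n, p) x.
  have [u1 u2] := pc_HW hSA (Ppc hA hSA (n, p) x).
  have := hcomp p n u (ZrI DA u1 u2) => /(PBr hB DB hSB).
  by rewrite (PB hB hSB) Pf => /eqP; rewrite subr_eq0 => /eqP.
- exact: FA_Er.
- exact: FA_Er.
Qed.

End Aux.
Import Aux.

Theorem lemma2p19 (k : fieldType) (r : nat) (A B : fdga k) (f : A -> B) :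
  [pchar k] =i pred0 ->
  is_fdga A -> is_fdga B -> is_fmor f ->
  is_fg_Er_cofibrant A r -> is_fg_Er_cofibrant B r ->
  (admits_rsplitting r f <-> Er_surjective r f) /\
  (Er_surjective r f <-> bigrading_lift r f).
Proof.
move=> hc hA hB hf cA cB.
have DA : Dr A r := cof_Dr hA hA cA.
have DB : Dr B r := cof_Dr hB hB cB.
split; split.
- exact: one_two hA hB hf DA DB.
- by move=> h; apply: (three_one hA hB hf DA DB); apply: (two_three hc hA hB hf DA DB).
- exact: two_three hc hA hB hf DA DB.
- by move=> h; apply: (one_two hA hB hf DA DB); apply: (three_one hA hB hf DA DB).
Qed.
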